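(* For all $p\in[0,1]$ and all $n\geq 1$ one has $$P^{\rm Ab}_n(p)\leq P^{\rm AB}_n(p)\qquad\text{and}\qquad P^{\rm aB}_n(p)\geq P^{\rm AB}_n(p).$$
   Context: Fix $n\geq1$. Two players, Alice and Bob, alternately make moves, Alice first, each making $n$ moves; every move is a choice from $\{1,2\}$. Write Alice's moves as $a=(a_1,\dots,a_n)$ and Bob's as $b=(b_1,\dots,b_n)$, and let $|a|_1:=\#\{k:a_k=1\}$, $|b|_1:=\#\{k:b_k=1\}$. Four games are defined by what the outcome of the game is: - in ${\rm AB}_n(p)$ the outcome is $(a,b)$; - in ${\rm Ab}_n(p)$ it is $(a,|b|_1)$; - in ${\rm aB}_n(p)$ it is $(|a|_1,b)$; - in ${\rm ab}_n(p)$ it is $(|a|_1,|b|_1)$. To each possible outcome a winner is assigned independently at random: Bob with probability $p$, Alice with probability $1-p$. The players know this assignment and all previous moves. A winning strategy for Bob is a rule choosing each of his moves as a function of the previous moves that guarantees the outcome is a win for Bob whatever Alice plays. $P^{\rm xx}_n(p)$ (for ${\rm xx}\in\{{\rm AB},{\rm Ab},{\rm aB},{\rm ab}\}$) is the probability that Bob has a winning strategy in ${\rm xx}_n(p)$. *)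

(* Defs.v *)
From mathcomp Require Import all_boot all_order all_algebra.
From mathcomp Require Import boolp.
Set Implicit Arguments. Unset Strict Implicit. Unset Printing Implicit Defensive.
Import Order.TTheory GRing.Theory Num.Theory.
Local Open Scope ring_scope.

(* A move is an element of {1,2}, encoded as a bool: true = 1, false = 2. *)
Definition move := bool.

Definition ones n (x : n.-tuple move) : 'I_n.+1 := inord (count id x).

(* A strategy for Bob: his next move as a function of the whole history of
   previous moves (listed in chronological order a1, b1, a2, b2, ...). *)
Definition strategy := seq move -> move.

Fixpoint bob_replies (s : strategy) (h : seq move) (a : seq move) : seq move :=
  match a with
  | [::] => [::]
  | x :: a' => let h1 := rcons h x in
               let y := s h1 in
               y :: bob_replies s (rcons h1 y) a'
  end.

Definition bob_moves n (s : strategy) (a : n.-tuple move) : n.-tuple move :=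
  [tuple nth false (bob_replies s [::] a) i | i < n].

(* A game with outcome set O and outcome map out (a, b) |-> outcome;
   w o = true means outcome o is a win for Bob.  Bob has a winning strategy. *)
Definition bob_has_winning_strategy n (O : finType)
    (out : n.-tuple move -> n.-tuple move -> O) (w : {ffun O -> bool}) : Prop :=
  exists s : strategy, forall a : n.-tuple move, w (out a (bob_moves s a)).

(* Probability of the random assignment w (independent, Bob w.p. p). *)
Definition weight (R : numDomainType) (p : R) (O : finType) (w : {ffun O -> bool}) : R :=
  \prod_(o : O) (if w o then p else 1 - p).

Definition prob_bob_wins (R : numDomainType) (p : R) n (O : finType)
    (out : n.-tuple move -> n.-tuple move -> O) : R :=
  \sum_(w : {ffun O -> bool} | `[< bob_has_winning_strategy out w >]) weight p w.

Definition out_AB n (a b : n.-tuple move) : (n.-tuple move * n.-tuple move)%type := (a, b).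
Definition out_Ab n (a b : n.-tuple move) : (n.-tuple move * 'I_n.+1)%type := (a, ones b).
Definition out_aB n (a b : n.-tuple move) : ('I_n.+1 * n.-tuple move)%type := (ones a, b).
Definition out_ab n (a b : n.-tuple move) : ('I_n.+1 * 'I_n.+1)%type := (ones a, ones b).

Definition P_AB (R : numDomainType) (p : R) n := prob_bob_wins p (@out_AB n).
Definition P_Ab (R : numDomainType) (p : R) n := prob_bob_wins p (@out_Ab n).
Definition P_aB (R : numDomainType) (p : R) n := prob_bob_wins p (@out_aB n).
Definition P_ab (R : numDomainType) (p : R) n := prob_bob_wins p (@out_ab n).

(* Main.v *)
Require Import Defs.
From mathcomp Require Import all_boot all_order all_algebra.
From mathcomp Require Import boolp ring lra.
From Stdlib Require Import Classical.
Set Implicit Arguments. Unset Strict Implicit. Unset Printing Implicit Defensive.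
Import Order.TTheory GRing.Theory Num.Theory.
Local Open Scope ring_scope.
Section Prob.
Variables (R : realFieldType) (p : R) (O : finType).
Hypothesis hp : 0 <= p <= 1.

Definition EE (F : {ffun O -> bool} -> bool) : R :=
  \sum_(w : {ffun O -> bool}) @weight R p O w * (F w)%:R.

Definition upd (w : {ffun O -> bool}) (o : O) (x : bool) : {ffun O -> bool} :=
  [ffun o' => if o' == o then x else w o'].

Definition cc (b : bool) : R := if b then p else 1 - p.

Lemma hp0 : 0 <= p. Proof. by case/andP: hp. Qed.
Lemma hp1 : 0 <= 1 - p. Proof. by case/andP: hp => _ h; rewrite subr_ge0. Qed.
Lemma cc_ge0 b : 0 <= cc b. Proof. by case: b; [exact: hp0| exact: hp1]. Qed.

Lemma weight_ge0 w : 0 <= @weight R p O w.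
Proof. by apply: prodr_ge0 => o _; apply: (cc_ge0 (w o)). Qed.

Lemma weight1 : \sum_(w : {ffun O -> bool}) @weight R p O w = 1.
Proof.
rewrite /weight -(bigA_distr_bigA (fun (o : O) (b : bool) => if b then p else 1 - p)).
by apply: big1 => o _; rewrite big_bool /= addrC subrK.
Qed.

Lemma EE_ext F G : (forall w, F w = G w) -> EE F = EE G.
Proof. by move=> h; apply: eq_bigr => w _; rewrite h. Qed.

Lemma EE_const (c : bool) : EE (fun _ => c) = c%:R.
Proof. by rewrite /EE -big_distrl /= weight1 mul1r. Qed.

Lemma EE_ge0 F : 0 <= EE F.
Proof. by apply: sumr_ge0 => w _; apply: mulr_ge0 (weight_ge0 w) _. Qed.

Lemma EE_mono (F G : {ffun O -> bool} -> bool) : (forall w, F w -> G w) -> EE F <= EE G.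
Proof.
move=> h; apply: ler_sum => w _; apply: ler_wpM2l; first exact: weight_ge0.
by case E: (F w); [rewrite (h _ E) | case: (G w)].
Qed.

Lemma EE_le1 F : EE F <= 1.
Proof. by apply: le_trans (EE_mono (G := fun _ => true) _) _; rewrite ?EE_const. Qed.

Lemma EE_or (F G : {ffun O -> bool} -> bool) : EE (fun w => F w || G w) = EE F + EE G - EE (fun w => F w && G w).
Proof.
apply/eqP; rewrite eq_sym subr_eq /EE -!big_split /=; apply/eqP; apply: eq_bigr => w _.
by case: (F w); case: (G w); rewrite /= ?mulr0 ?addr0 ?add0r.
Qed.

Lemma weight_upd w o x :
  @weight R p O (upd w o x) = cc x * \prod_(o' | o' != o) cc (w o').
Proof.
rewrite /weight (bigD1 o) //= /upd ffunE eqxx; congr (_ * _).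
by apply: eq_bigr => o' /negbTE h; rewrite ffunE h.
Qed.

Lemma upd_id w o : upd w o (w o) = w.
Proof. by apply/ffunP => o'; rewrite ffunE; case: eqP => // ->. Qed.

Lemma upd_upd w o x y : upd (upd w o x) o y = upd w o y.
Proof. by apply/ffunP => o'; rewrite !ffunE; case: eqP. Qed.

Lemma rest_upd w o x :
  \prod_(o' | o' != o) cc (upd w o x o') = \prod_(o' | o' != o) cc (w o').
Proof. by apply: eq_bigr => o' /negbTE h; rewrite ffunE h. Qed.

Lemma updE w o x : upd w o x o = x.
Proof. by rewrite ffunE eqxx. Qed.

Lemma sum_split o (K : {ffun O -> bool} -> R) :
  \sum_(w : {ffun O -> bool}) K w =
  \sum_(w : {ffun O -> bool} | w o) (K (upd w o true) + K (upd w o false)).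
Proof.
rewrite (bigID (fun w : {ffun O -> bool} => w o)) /= big_split /=; congr (_ + _).
  by apply: eq_bigr => w h; rewrite -{1}(upd_id w o) h.
have inv : involutive (fun w => upd w o (~~ w o)).
  by move=> w; rewrite /= upd_upd updE negbK upd_id.
rewrite (reindex_inj (inv_inj inv)) /=.
apply: eq_big => w; first by rewrite updE negbK. by rewrite updE negbK => ->.
Qed.

Lemma EE_cond o F :
  EE F = p * EE (fun w => F (upd w o true)) + (1 - p) * EE (fun w => F (upd w o false)).
Proof.
rewrite /EE !(sum_split o) !big_distrr -big_split /=.
idtac. Show. apply: eq_bigr => w _.
rewrite !upd_upd !weight_upd /cc.
set r := \prod_(o' | o' != o) _.
set f1 := (F (upd w o true))%:R. set f0 := (F (upd w o false))%:R.
ring.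
Qed.


Definition mono (F : {ffun O -> bool} -> bool) :=
  forall w w' : {ffun O -> bool}, (forall o, w o -> w' o) -> F w -> F w'.
Definition depS (P : O -> Prop) (F : {ffun O -> bool} -> bool) :=
  forall w w' : {ffun O -> bool}, (forall o, P o -> w o = w' o) -> F w = F w'.

Let w0 : {ffun O -> bool} := [ffun => false].

Lemma dep_nil_const P F : (forall o, ~ P o) -> depS P F -> forall w, F w = F w0.
Proof. by move=> hP hF w; apply: hF => o /hP. Qed.

Lemma dep_upd (S : seq O) (P : O -> Prop) o x F :
  depS (fun o' => o' \in o :: S /\ P o') F ->
  depS (fun o' => o' \in S /\ P o') (fun w => F (upd w o x)).
Proof.
move=> hF w w' h; apply: hF => o' [ho' hp']; rewrite !ffunE.
case: eqP => // /eqP ne; apply: h; split => //.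
by move: ho'; rewrite inE (negbTE ne).
Qed.

Lemma harris_aux (S : seq O) : forall F G, mono F -> mono G ->
  depS (fun o => o \in S /\ True) F -> depS (fun o => o \in S /\ True) G ->
  EE F * EE G <= EE (fun w => F w && G w).
Proof.
elim: S => [|o S IH] F G mF mG dF dG.
  have hF := dep_nil_const (P := fun o => o \in [::] /\ True) (fun o => fun h => notF (proj1 h)) dF.
  have hG := dep_nil_const (P := fun o => o \in [::] /\ True) (fun o => fun h => notF (proj1 h)) dG.
  rewrite (EE_ext (F := fun w => F w && G w) (G := fun _ => F w0 && G w0)); last first.
    by move=> w; rewrite hF hG.
  rewrite (EE_ext hF) (EE_ext hG).
  by rewrite !EE_const; case: (F w0); case: (G w0); rewrite /= ?mulr0 ?mul0r ?mulr1.
have mu x : mono F -> mono (fun w => F (upd w o x)).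
  move=> m w w' h; apply: m => o'; rewrite !ffunE; case: eqP => // _; exact: h.
have mu' x : mono G -> mono (fun w => G (upd w o x)).
  move=> m w w' h; apply: m => o'; rewrite !ffunE; case: eqP => // _; exact: h.
have le01 (H : {ffun O -> bool} -> bool) : mono H ->
    EE (fun w => H (upd w o false)) <= EE (fun w => H (upd w o true)).
  move=> m; apply: EE_mono => w; apply: m => o'; rewrite !ffunE; case: eqP => //.
rewrite (EE_cond o F) (EE_cond o G) (EE_cond o (fun w => F w && G w)) /=.
have h1 := IH _ _ (mu true mF) (mu' true mG) (dep_upd true dF) (dep_upd true dG).
have h0 := IH _ _ (mu false mF) (mu' false mG) (dep_upd false dF) (dep_upd false dG).
have a01 := le01 F mF; have b01 := le01 G mG.
move: h1 h0 a01 b01.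
set a1 := EE (fun w => F (upd w o true)); set a0 := EE (fun w => F (upd w o false)).
set b1 := EE (fun w => G (upd w o true)); set b0 := EE (fun w => G (upd w o false)).
set c1 := EE (fun w => _ && _); set c0 := EE (fun w => _ && _).
move=> h1 h0 a01 b01.
have pp := hp0; have qq := hp1.
apply: le_trans (_ : p * (a1 * b1) + (1 - p) * (a0 * b0) <= _); last first.
  by apply: lerD; apply: ler_wpM2l.
rewrite -subr_ge0.
have -> : p * (a1 * b1) + (1 - p) * (a0 * b0) - (p * a1 + (1 - p) * a0) * (p * b1 + (1 - p) * b0)
  = p * (1 - p) * ((a1 - a0) * (b1 - b0)) by ring.
by apply: mulr_ge0; [apply: mulr_ge0 | apply: mulr_ge0; rewrite subr_ge0].
Qed.

Lemma harris F G : mono F -> mono G -> EE F * EE G <= EE (fun w => F w && G w).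
Proof.
move=> mF mG; apply: (harris_aux (S := enum O)) => // w w' h;
  by congr (_ _); apply/ffunP => o; apply: h; rewrite mem_enum.
Qed.


Lemma indep_aux (P1 P2 : O -> Prop) (G : {ffun O -> bool} -> bool) :
  (forall o, P1 o -> P2 o -> False) -> depS P2 G ->
  forall (S : seq O) F, depS (fun o => o \in S /\ P1 o) F ->
  EE (fun w => F w && G w) = EE F * EE G.
Proof.
move=> disj dG; elim=> [|o S IH] F dF.
  have hF := dep_nil_const (P := fun o => o \in [::] /\ P1 o) (fun o => fun h => notF (proj1 h)) dF.
  rewrite (EE_ext (F := fun w => F w && G w) (G := fun w => F w0 && G w)); last first.
    by move=> w; rewrite hF.
  rewrite (EE_ext hF) EE_const.
  case: (F w0); rewrite /= ?mul1r ?mul0r //.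
  by rewrite EE_const.
case: (classic (P2 o)) => hP2.
  apply: IH => w w' h; apply: dF => o' [ho' hq].
  move: ho'; rewrite inE; case: eqP => [eo _|_ /= ho']; last exact: h.
  by rewrite -eo in hP2; case: (disj o' hq hP2).
have hGu x w : G (upd w o x) = G w.
  apply: dG => o' h2; rewrite ffunE; case: eqP => // eo; by rewrite eo in h2.
rewrite (EE_cond o F) (EE_cond o (fun w => F w && G w)) /=.
rewrite (EE_ext (F := fun w => F (upd w o true) && G (upd w o true))
                (G := fun w => F (upd w o true) && G w)); last by move=> w; rewrite hGu.
rewrite (EE_ext (F := fun w => F (upd w o false) && G (upd w o false))
                (G := fun w => F (upd w o false) && G w)); last by move=> w; rewrite hGu.
rewrite (IH (fun w => F (upd w o true))) ?(IH (fun w => F (upd w o false))); try exact: dep_upd.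
by rewrite [RHS]mulrDl !mulrA.
Qed.

Lemma indep (P1 P2 : O -> Prop) F G :
  (forall o, P1 o -> P2 o -> False) -> depS P1 F -> depS P2 G ->
  EE (fun w => F w && G w) = EE F * EE G.
Proof.
move=> disj dF dG; apply: (indep_aux disj dG (S := enum O)) => w w' h.
by apply: dF => o ho; apply: h; rewrite mem_enum.
Qed.

Lemma EE_var o : EE (fun w => w o) = p.
Proof.
rewrite (EE_cond o) /= (EE_ext (F := fun w => upd w o true o) (G := fun _ => true)); last by move=> w; rewrite updE.
rewrite (EE_ext (F := fun w => upd w o false o) (G := fun _ => false)); last by move=> w; rewrite updE.
by rewrite !EE_const mulr1 mulr0 addr0.
Qed.

End Prob.

Local Close Scope ring_scope.
Fixpoint Gm (m : nat) (f : seq bool -> seq bool -> bool) : bool :=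
  if m is m'.+1 then
   (Gm m' (fun a b => f (true :: a) (true :: b)) || Gm m' (fun a b => f (true :: a) (false :: b))) &&
   (Gm m' (fun a b => f (false :: a) (true :: b)) || Gm m' (fun a b => f (false :: a) (false :: b)))
  else f [::] [::].

Lemma bob_replies_ext (s1 s2 : strategy) a : forall h,
  (forall t, s1 (h ++ t) = s2 (h ++ t)) -> bob_replies s1 h a = bob_replies s2 h a.
Proof.
elim: a => [|x a IH] h e //=.
have e1 : s1 (rcons h x) = s2 (rcons h x) by rewrite -cats1 e.
rewrite e1; congr (_ :: _); apply: IH => t.
by rewrite -!cats1 -!catA /= e.
Qed.

Lemma strat_G m : forall (f : seq bool -> seq bool -> bool) h,
  (exists s : strategy, forall a, size a = m -> f a (bob_replies s h a)) <-> Gm m f.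
Proof.
elim: m => [|m IH] f h.
  split; first by case=> s /(_ [::] erefl).
  by move=> H; exists (fun _ => true) => a /size0nil ->.
split.
  case=> s hs.
  have hx x : Gm m (fun a b => f (x :: a) (s (rcons h x) :: b)).
    apply/(IH _ (rcons (rcons h x) (s (rcons h x)))); exists s => a sa.
    exact: (hs (x :: a) (congr1 S sa)).
  by rewrite /=; apply/andP; split; [have := hx true | have := hx false];
    case: (s _) => ->; rewrite ?orbT.
move=> /= /andP [HT HF].
pose y (x : bool) := Gm m (fun a b => f (x :: a) (true :: b)).
have hy x : Gm m (fun a b => f (x :: a) (y x :: b)).
  rewrite /y; case: x {y} HT HF => [HT _|_ HF];
    [case E: (Gm _ _) HT => //= | case E: (Gm _ _) HF => //=].
have [sT hT] := (IH _ (rcons (rcons h true) (y true))).2 (hy true).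
have [sF hF] := (IH _ (rcons (rcons h false) (y false))).2 (hy false).
pose s (h' : seq bool) :=
  if h' == rcons h true then y true else if h' == rcons h false then y false
  else if take (size h).+2 h' == rcons (rcons h true) (y true) then sT h' else sF h'.
exists s => -[|x a] //= [sa].
have -> : s (rcons h x) = y x.
  by rewrite /s; case: x; rewrite eqxx //; case: eqP => // /rcons_inj [].
have ext x' (s' : strategy) : (forall t, s' (rcons (rcons h x') (y x') ++ t) =
          s (rcons (rcons h x') (y x') ++ t)) ->
     bob_replies s (rcons (rcons h x') (y x')) a = bob_replies s' (rcons (rcons h x') (y x')) a.
  by move=> e; apply: bob_replies_ext => t; rewrite e.
have sz x' t : size (rcons (rcons h x') (y x') ++ t) = (size h).+2 + size t.
  by rewrite size_cat !size_rcons.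
have ne x' x'' t : rcons (rcons h x') (y x') ++ t == rcons h x'' = false.
  apply/negbTE/eqP => /(congr1 size); rewrite sz size_rcons => e.
  by have := leq_addr (size t) (size h).+2; rewrite e ltnn.
case: x => /=.
  rewrite (ext true sT); first exact: hT.
  move=> t; rewrite /s !ne.
  have -> : take (size h).+2 (rcons (rcons h true) (y true) ++ t) = rcons (rcons h true) (y true).
    by rewrite take_cat !size_rcons ltnn subnn take0 cats0.
  by rewrite eqxx.
rewrite (ext false sF); first exact: hF.
move=> t; rewrite /s !ne.
have -> : take (size h).+2 (rcons (rcons h false) (y false) ++ t) = rcons (rcons h false) (y false).
  by rewrite take_cat !size_rcons ltnn subnn take0 cats0.
by case: eqP => // /rcons_inj [] /rcons_inj [].
Qed.

Local Open Scope ring_scope.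
Definition tup n (s : seq bool) : n.-tuple bool := [tuple nth false s i | i < n].

Lemma tupK n (t : n.-tuple bool) : tup n t = t.
Proof. by apply: eq_from_tnth => i; rewrite tnth_mktuple (tnth_nth false). Qed.

Lemma tup_inj n a a' : size a = n -> size a' = n -> tup n a = tup n a' -> a = a'.
Proof.
move=> sa sa' e.
have ha : size a == n by rewrite sa.
have ha' : size a' == n by rewrite sa'.
have := tupK (Tuple ha); have := tupK (Tuple ha') => /= e1 e2.
by have := congr1 val (etrans (esym e2) (etrans e e1)).
Qed.

Lemma bws_G n (O : finType) (out : n.-tuple move -> n.-tuple move -> O) w :
  bob_has_winning_strategy out w <-> Gm n (fun a b => w (out (tup n a) (tup n b))).
Proof.
rewrite -(strat_G _ _ [::]); split.
  case=> s hs; exists s => a sa.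
  have ha : size a == n by rewrite sa.
  have := hs (Tuple ha); rewrite /bob_moves.
  by have -> : tup n a = Tuple ha := tupK (Tuple ha).
case=> s hs; exists s => a.
by have := hs a (size_tuple a); rewrite tupK.
Qed.

Lemma G_ext m : forall (f f' : seq bool -> seq bool -> bool),
  (forall a b, size a = m -> size b = m -> f a b = f' a b) -> Gm m f = Gm m f'.
Proof.
elim: m => [|m IH] f f' e /=; first exact: e.
have h x y : Gm m (fun a b => f (x :: a) (y :: b)) = Gm m (fun a b => f' (x :: a) (y :: b)).
  by apply: IH => a b sa sb; apply: e => /=; rewrite ?sa ?sb.
by rewrite !h.
Qed.

Lemma G_mono m : forall (f f' : seq bool -> seq bool -> bool),
  (forall a b, f a b -> f' a b) -> Gm m f -> Gm m f'.
Proof.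
elim: m => [|m IH] f f' e /=; first exact: e.
case/andP => /orP h1 /orP h2; apply/andP; split; apply/orP.
  by case: h1 => h; [left|right]; apply: IH h => a b; apply: e.
by case: h2 => h; [left|right]; apply: IH h => a b; apply: e.
Qed.

Section Main.
Variables (R : realFieldType) (p : R).
Hypothesis hp : 0 <= p <= 1.

Fixpoint gg m : R := if m is m'.+1 then (1 - (1 - gg m') ^+ 2) ^+ 2 else p.

Lemma gg_bnd m : 0 <= gg m <= 1.
Proof.
elim: m => [|m IH] //=; move: IH => /andP [h0 h1].
have a0 : 0 <= 1 - gg m by rewrite subr_ge0.
have a1 : 1 - gg m <= 1 by rewrite lerBlDr lerDl.
have b0 : 0 <= (1 - gg m) ^+ 2 by rewrite exprn_ge0.
have b1 : (1 - gg m) ^+ 2 <= 1 by rewrite exprn_ile1.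
have c0 : 0 <= 1 - (1 - gg m) ^+ 2 by rewrite subr_ge0.
have c1 : 1 - (1 - gg m) ^+ 2 <= 1 by rewrite lerBlDr lerDl.
by rewrite exprn_ge0 // exprn_ile1.
Qed.

Definition Ev (O : finType) m (l : seq bool -> seq bool -> O) (w : {ffun O -> bool}) :=
  Gm m (fun a b => w (l a b)).

Lemma Ev_mono (O : finType) m l : mono (@Ev O m l).
Proof. by move=> w w' h; apply: G_mono => a b; apply: h. Qed.

Lemma Ev_dep (O : finType) m l (P : O -> Prop) :
  (forall a b, size a = m -> size b = m -> P (l a b)) -> depS P (@Ev O m l).
Proof. by move=> hP w w' h; apply: G_ext => a b sa sb; apply: h; apply: hP. Qed.


Lemma alg_ab (e1 e2 c g : R) : 0 <= e1 -> e1 <= g -> 0 <= e2 -> e2 <= g -> g <= 1 ->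
  e1 * e2 <= c -> e1 + e2 - c <= 1 - (1 - g) ^+ 2.
Proof.
move=> h1 h2 h3 h4 h5 h6.
have : 0 <= (g - e1) * (1 - e2) by apply: mulr_ge0; rewrite subr_ge0 // (le_trans h4 h5).
have : 0 <= (1 - g) * (g - e2) by apply: mulr_ge0; rewrite subr_ge0.
rewrite expr2; nra.
Qed.

Lemma alg_aB (e1 e2 g : R) : e1 <= 1 -> g <= e1 -> e2 <= 1 -> g <= e2 -> 0 <= g ->
  1 - (1 - g) ^+ 2 <= e1 + e2 - e1 * e2.
Proof.
move=> h1 h2 h3 h4 h5.
have : 0 <= (e1 - g) * (1 - e2) by apply: mulr_ge0; rewrite subr_ge0.
have : 0 <= (1 - g) * (e2 - g) by apply: mulr_ge0; rewrite subr_ge0 // (le_trans h4 h3).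
rewrite expr2; nra.
Qed.

Lemma Lab (O : finType) m : forall (l : seq bool -> seq bool -> O),
  (forall a b a' b', size a = m -> size b = m -> size a' = m -> size b' = m ->
     l a b = l a' b' -> a = a') ->
  EE p (Ev m l) <= gg m.
Proof.
elim: m => [|m IH] l hl.
  apply: le_trans (EE_mono hp (G := fun w => w (l [::] [::])) _) _ => //.
  by rewrite EE_var.
have sc (x : bool) s : size s = m -> size (x :: s) = m.+1 := fun h => congr1 S h.
pose B x y := Ev m (fun a b => l (x :: a) (y :: b)).
pose A x := fun w => B x true w || B x false w.
pose Q x o := exists a b y, size a = m /\ size b = m /\ o = l (x :: a) (y :: b).
have dA x : depS (Q x) (A x).
  move=> w w' h; rewrite /A /B.
  by rewrite !(Ev_dep (P := Q x) _ h) // => a b sa sb; [exists a, b, false | exists a, b, true].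
have disj o : Q true o -> Q false o -> False.
  move=> [a [b [y [sa [sb ->]]]]] [a' [b' [y' [sa' [sb' e]]]]].
  by have := hl _ _ _ _ (sc _ _ sa) (sc _ _ sb) (sc _ _ sa') (sc _ _ sb') e.
have hl' x y : forall a b a' b', size a = m -> size b = m -> size a' = m -> size b' = m ->
     l (x :: a) (y :: b) = l (x :: a') (y :: b') -> a = a'.
  move=> a b a' b' sa sb sa' sb' e.
  by case: (hl _ _ _ _ (sc _ _ sa) (sc _ _ sb) (sc _ _ sa') (sc _ _ sb') e).
have hg := gg_bnd m; case/andP: hg => g0 g1.
have hA x : EE p (A x) <= 1 - (1 - gg m) ^+ 2.
  rewrite /A EE_or; apply: alg_ab; rewrite ?EE_ge0 ?IH //; try exact: hl'.
  apply: (harris hp); exact: Ev_mono.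
rewrite (@EE_ext _ p _ (Ev m.+1 l) (fun w => A true w && A false w)) //.
rewrite (indep p disj (dA true) (dA false)) /=.
apply: ler_pM; rewrite ?EE_ge0 //.
Qed.


Lemma LaB (O : finType) m : forall (l : seq bool -> seq bool -> O),
  (forall a b a' b', size a = m -> size b = m -> size a' = m -> size b' = m ->
     l a b = l a' b' -> b = b') ->
  gg m <= EE p (Ev m l).
Proof.
elim: m => [|m IH] l hl.
  apply: le_trans (EE_mono hp (F := fun w => w (l [::] [::])) _) => //.
  by rewrite EE_var.
have sc (x : bool) s : size s = m -> size (x :: s) = m.+1 := fun h => congr1 S h.
pose B x y := Ev m (fun a b => l (x :: a) (y :: b)).
pose A x := fun w => B x true w || B x false w.
pose Q x y o := exists a b, size a = m /\ size b = m /\ o = l (x :: a) (y :: b).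
have dB x y : depS (Q x y) (B x y).
  by move=> w w' h; rewrite /B (Ev_dep (P := Q x y) _ h) // => a b sa sb; exists a, b.
have disj x o : Q x true o -> Q x false o -> False.
  move=> [a [b [sa [sb ->]]]] [a' [b' [sa' [sb' e]]]].
  by have := hl _ _ _ _ (sc _ _ sa) (sc _ _ sb) (sc _ _ sa') (sc _ _ sb') e.
have hl' x y : forall a b a' b', size a = m -> size b = m -> size a' = m -> size b' = m ->
     l (x :: a) (y :: b) = l (x :: a') (y :: b') -> b = b'.
  move=> a b a' b' sa sb sa' sb' e.
  by case: (hl _ _ _ _ (sc _ _ sa) (sc _ _ sb) (sc _ _ sa') (sc _ _ sb') e).
have hg := gg_bnd m; case/andP: hg => g0 g1.
have hA x : 1 - (1 - gg m) ^+ 2 <= EE p (A x).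
  rewrite /A EE_or (indep p (disj x) (dB x true) (dB x false)).
  apply: alg_aB; rewrite ?EE_le1 ?IH //; exact: hl'.
have a0 : 0 <= 1 - gg m by rewrite subr_ge0.
have a1 : 1 - gg m <= 1 by rewrite lerBlDr lerDl.
have h0 : 0 <= 1 - (1 - gg m) ^+ 2 by rewrite subr_ge0 exprn_ile1.
rewrite (@EE_ext _ p _ (Ev m.+1 l) (fun w => A true w && A false w)) //.
apply: le_trans (harris hp _ _) => /=.
  by apply: ler_pM.
all: by move=> w w' h /orP [] hb; apply/orP; [left|right]; apply: (Ev_mono h).
Qed.

End Main.

Lemma prob_EE (R : realFieldType) (p : R) n (O : finType)
  (out : n.-tuple move -> n.-tuple move -> O) :
  prob_bob_wins p out = EE p (Ev n (fun a b => out (tup n a) (tup n b))).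
Proof.
rewrite /prob_bob_wins /EE big_mkcond; apply: eq_bigr => w _.
have := bws_G out w; rewrite /Ev.
case: asboolP => h; case: (Gm _ _) => -[h1 h2]; rewrite ?mulr1 ?mulr0 //.
  by have := h1 h.
by case: h; apply: h2.
Qed.

Theorem proposition1 (R : realFieldType) (p : R) (n : nat) :
  0 <= p <= 1 -> (1 <= n)%N ->
  P_Ab p n <= P_AB p n /\ P_AB p n <= P_aB p n.
Proof.
move=> hp _.
rewrite /P_Ab /P_AB /P_aB !prob_EE.
have hAB1 := Lab hp (m := n) (l := fun a b => out_AB (tup n a) (tup n b)).
have hAB2 := LaB hp (m := n) (l := fun a b => out_AB (tup n a) (tup n b)).
have hAb := Lab hp (m := n) (l := fun a b => out_Ab (tup n a) (tup n b)).
have haB := LaB hp (m := n) (l := fun a b => out_aB (tup n a) (tup n b)).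
split.
  apply: le_trans (hAb _) (hAB2 _) => a b a' b' sa sb sa' sb' e;
    [exact: tup_inj sa sa' (congr1 fst e) | exact: tup_inj sb sb' (congr1 snd e)].
apply: le_trans (hAB1 _) (haB _) => a b a' b' sa sb sa' sb' e;
    [exact: tup_inj sa sa' (congr1 fst e) | exact: tup_inj sb sb' (congr1 snd e)].
Qed.
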